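(* Let $\mathcal{D}$ be a distribution on $\mathbb{S}^{n-1}$, $f(x)=\bigwedge_{i=1}^k\mathrm{sign}(w_i\cdot x)$ with unit vectors $w_i$, $\varepsilon,\rho\in(0,1/2)$, and suppose $\Pr_{\mathbf{x}\sim\mathcal{D}_-}[w_1\cdot\mathbf{x}<-\rho]>0$. Let $\mathcal{K}\subseteq\mathbb{R}^{n+1}$ be a bounded convex body and for $x\in\mathbb{R}^n$ let $\mathcal{K}_x=\mathcal{K}\cap\{w:w\cdot(x,1)<0\}$. Let $\mathcal{D}_-^{(1)}$ denote $\mathcal{D}_-$ conditioned on $w_1\cdot\mathbf{x}<-\rho$. Then \[\Pr_{\mathbf{x}\sim\mathcal{D}_-}[w_1\cdot\mathbf{x}<-\rho]\cdot\mathbb{E}_{\mathbf{x}\sim\mathcal{D}_-^{(1)}}\left[\left|\mathcal{K}_{\mathbf{x}}^{\mathrm{bad}}\right|\right]\le\frac{100n}{\varepsilon^2}\cdot M_+^{-1}\log(M_+)\cdot\left|\mathcal{K}^{\mathrm{bad}}\right|.\]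
   Context: $f(x)=1$ iff $w_i\cdot x>0$ for all $i$, else $-1$; $\mathcal{D}_-$ is $\mathcal{D}$ conditioned on $f(\mathbf{x})=-1$; $|\cdot|$ is Lebesgue volume. Set $M_-=\sqrt{n\log(9/\rho)/\log(2k\varepsilon^{-1})}$ and $M_+=\left(200k\cdot\frac{n^2M_-}{\varepsilon^4}\right)^2\cdot2^{\sqrt{n\log(9/\rho)\log(2k\varepsilon^{-1})}}$. For any convex body $\mathcal{K}\subseteq\mathbb{R}^{n+1}$, $\mathcal{K}^{\mathrm{good}}=\{w\in\mathcal{K}:\Pr_{\mathbf{x}\sim\mathcal{D}_-}[w\cdot(\mathbf{x},1)<0]\ge\frac{100n}{\varepsilon^2}\cdot\frac{\log(M_+)}{M_+}\}$ and $\mathcal{K}^{\mathrm{bad}}=\mathcal{K}\setminus\mathcal{K}^{\mathrm{good}}$ (applied to $\mathcal{K}_x$ as well). *)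

(* Defs.v *)
From HB Require Import structures.
From mathcomp Require Import all_boot all_order all_algebra.
From mathcomp Require Import all_classical all_reals all_analysis.
Set Implicit Arguments. Unset Strict Implicit. Unset Printing Implicit Defensive.
Import Order.TTheory GRing.Theory Num.Theory.
Import numFieldNormedType.Exports.
Local Open Scope classical_set_scope.
Local Open Scope ring_scope.

(* Points of R^m are represented as m-tuples of reals; m.-tuple R carries
   the product (= Borel) sigma-algebra of the library. *)

Section Defs.
Variable R : realType.

Definition dotp (m : nat) (u v : m.-tuple R) : R :=
  \sum_(i < m) tnth u i * tnth v i.

Definition ext1 (n : nat) (x : n.-tuple R) : n.+1.-tuple R :=
  [tuple (if (i < n)%N then nth 0 (x : seq R) i else 1) | i < n.+1].

Definition sphere (n : nat) : set (n.-tuple R) := [set x | dotp x x = 1].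

Definition fAND (n k : nat) (w : 'I_k -> n.-tuple R) (x : n.-tuple R) : R :=
  if [forall i, 0 < dotp (w i) x] then 1 else -1.

Definition condPr (T : measurableType (measure_tuple_display default_measure_display))
  (P : probability T R) (B A : set T) : R :=
  fine (P (A `&` B)) / fine (P B).

Definition condE (T : measurableType (measure_tuple_display default_measure_display))
  (P : probability T R) (A : set T) (g : T -> \bar R) : \bar R :=
  ((fine (P A))^-1)%:E * (\int[P]_(x in A) g x)%E.

(* Lebesgue measure on R^m : assigns to every half-open box its volume
   (this characterizes Lebesgue measure on the Borel sets uniquely) *)
Definition is_lebesgue (m : nat) (lam : set (m.-tuple R) -> \bar R) : Prop :=
  forall a b : m.-tuple R, (forall i, tnth a i <= tnth b i) ->
    lam [set x | forall i, tnth a i <= tnth x i < tnth b i] =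
    (\prod_(i < m) (tnth b i - tnth a i))%:E.

Definition convex_set (m : nat) (K : set (m.-tuple R)) : Prop :=
  forall u v t, K u -> K v -> 0 <= t <= 1 ->
    K [tuple t * tnth u i + (1 - t) * tnth v i | i < m].

Definition bounded_set (m : nat) (K : set (m.-tuple R)) : Prop :=
  exists M : R, forall w, K w -> forall i, `|tnth w i| <= M.

Definition closed_set (m : nat) (K : set (m.-tuple R)) : Prop :=
  forall (u : nat -> m.-tuple R) (w : m.-tuple R),
    (forall j, K (u j)) -> (forall i, (fun j => tnth (u j) i) @ \oo --> tnth w i) ->
    K w.

Definition nonempty_interior (m : nat) (K : set (m.-tuple R)) : Prop :=
  exists (c : m.-tuple R) (r : R), 0 < r /\
    forall w, (forall i, `|tnth w i - tnth c i| < r) -> K w.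

Definition convex_body (m : nat) (K : set (m.-tuple R)) : Prop :=
  [/\ convex_set K, bounded_set K, closed_set K & nonempty_interior K].

Definition Mminus (n k : nat) (eps rho : R) : R :=
  Num.sqrt (n%:R * ln (9 / rho) / ln (2 * k%:R * eps^-1)).

Definition Mplus (n k : nat) (eps rho : R) : R :=
  (200 * k%:R * (n%:R ^+ 2 * Mminus n k eps rho / eps ^+ 4)) ^+ 2 *
  powR 2 (Num.sqrt (n%:R * ln (9 / rho) * ln (2 * k%:R * eps^-1))).

Definition thr (n k : nat) (eps rho : R) : R :=
  100 * n%:R / eps ^+ 2 * (ln (Mplus n k eps rho) / Mplus n k eps rho).

(* D_- event: f(x) = -1 *)
Definition negEv (n k : nat) (w : 'I_k -> n.-tuple R) : set (n.-tuple R) :=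
  [set x | fAND w x = -1].

Definition Kbad (n k : nat) (w : 'I_k -> n.-tuple R) (eps rho : R)
  (P : probability (n.-tuple R) R) (K : set (n.+1.-tuple R)) : set (n.+1.-tuple R) :=
  [set v | K v /\ condPr P (negEv w) [set x | dotp v (ext1 x) < 0] < thr n k eps rho].

Definition Ksub (n : nat) (K : set (n.+1.-tuple R)) (x : n.-tuple R) : set (n.+1.-tuple R) :=
  K `&` [set v | dotp v (ext1 x) < 0].

End Defs.

(* Main.v *)
Require Import Defs.
From HB Require Import structures.
From mathcomp Require Import all_boot all_order all_algebra.
From mathcomp Require Import all_classical all_reals all_analysis.
From mathcomp Require Import measurable_realfun.
From mathcomp Require Import ring lra zify.
Import Order.TTheory GRing.Theory Num.Theory.
Import numFieldNormedType.Exports.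
Local Open Scope classical_set_scope.
Local Open Scope ring_scope.

Section Helpers.
Context (R : realType).


Lemma m_tnth_ext1 n (i : 'I_n.+1) :
  measurable_fun setT (fun x : n.-tuple R => tnth (ext1 x) i).
Proof.
rewrite /ext1; under eq_fun do rewrite tnth_mktuple.
case: (ltnP i n) => h.
  have -> : (fun x : n.-tuple R => nth 0 (x : seq R) i) = fun x => tnth x (Ordinal h).
    by apply/funext => x; rewrite (tnth_nth 0).
  exact: measurable_tnth.
exact: measurable_cst.
Qed.

Lemma m_dotp_l n (u : n.-tuple R) : measurable_fun setT (fun x : n.-tuple R => dotp u x).
Proof.
rewrite /dotp; apply: measurable_sum => i.
apply: measurable_funM; [exact: measurable_cst| exact: measurable_tnth].
Qed.

Lemma m_dotp_pair n :
  measurable_fun setT (fun p : n.+1.-tuple R * n.-tuple R => dotp p.1 (ext1 p.2)).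
Proof.
rewrite /dotp; apply: measurable_sum => i.
apply: measurable_funM.
  exact: (measurableT_comp (measurable_tnth i) measurable_fst).
exact: (measurableT_comp (m_tnth_ext1 _ i) measurable_snd).
Qed.



Lemma meas_forall d (T : measurableType d) m (A : 'I_m -> set T) :
  (forall i, measurable (A i)) -> measurable [set x | forall i, A i x].
Proof.
move=> mA.
have -> : [set x | forall i, A i x] = ~` \bigcup_(i : 'I_m) ~` A i.
  apply/seteqP; split => x /=.
    by move=> H [i _ /=]; apply; apply: H.
  move=> H i; apply/not_notP => Hn; apply: H; by exists i.
apply: measurableC; apply: countable_bigcupT_measurable; first exact: countableP.
by move=> i; apply: measurableC.
Qed.

Definition rbox m (c : m.-tuple rat) (j : nat) : set (m.-tuple R) :=
  [set x | forall i, `|tnth x i - ratr (tnth c i)| < j.+1%:R^-1].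
Arguments rbox {m} c j.

Lemma rbox_meas m c j : measurable (@rbox m c j).
Proof.
apply: meas_forall => i.
have mf : measurable_fun setT (fun x : m.-tuple R => `|tnth x i - ratr (tnth c i)|).
  apply: measurableT_comp => //; apply: measurable_funB; first exact: measurable_tnth.
  exact: measurable_cst.
rewrite -[X in measurable X]setTI.
have := mf measurableT _ (measurable_itv `]-oo, j.+1%:R^-1[).
congr measurable; apply/seteqP; split => x /=; rewrite ?in_itv //= => [[_ ->]]//.
Qed.

Lemma closed_meas m (K : set (m.-tuple R)) : closed_set K -> measurable K.
Proof.
move=> cK; rewrite -[K]setCK; apply: measurableC.
pose F (p : m.-tuple rat * nat) :=
  [set x | rbox p.1 p.2 `<=` ~` K /\ rbox p.1 p.2 x].
have -> : ~` K = \bigcup_p F p.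
  apply/seteqP; split; last by move=> x [p _ [H1 H2]]; apply: H1.
  move=> v nKv.
  have [J HJ] : exists J : nat, forall u, K u ->
      exists i, J.+1%:R^-1 <= `|tnth u i - tnth v i|.
    apply/not_notP => H1; apply: nKv.
    have H2 : forall j : nat, exists u, K u /\
        forall i, `|tnth u i - tnth v i| < j.+1%:R^-1.
      move=> j; apply/not_notP => H3; apply: H1; exists j => u Ku.
      apply/not_notP => H4; apply: H3; exists u; split => // i.
      by rewrite ltNge; apply/negP => H5; apply: H4; exists i.
    have [u Hu] := choice H2.
    apply: (cK u) => [j|i]; first by case: (Hu j).
    apply/cvgrPdist_lt => e e0.
    have := near_infty_natSinv_lt (PosNum e0).
    apply: filterS => j /= Hj.
    by rewrite distrC; apply: lt_trans Hj; case: (Hu j) => _ /(_ i).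
  pose j := (2 * J).+1.
  have Hq : forall i : 'I_m, exists q : rat,
      `|tnth v i - ratr q| < j.+1%:R^-1.
    move=> i.
    have hlt : tnth v i - j.+1%:R^-1 < tnth v i + j.+1%:R^-1.
      by rewrite ltrD2l gtrN // invr_gt0 ltr0n.
    have [q] := rat_in_itvoo hlt.
    rewrite in_itv /= => /andP[h1 h2]; exists q.
    rewrite ltr_distl; apply/andP; split; [by rewrite ltrBlDr | by rewrite -ltrBlDr].
  have [cf Hcf] := choice Hq.
  exists ([tuple cf i | i < m], j) => //; split => /= [x Hx Kx|i]; last first.
    by rewrite tnth_mktuple.
  have [i Hi] := HJ x Kx.
  have := Hx i; have := Hcf i; rewrite tnth_mktuple => h1 h2.
  have h3 : `|tnth x i - tnth v i| < j.+1%:R^-1 + j.+1%:R^-1.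
    apply: le_lt_trans (ler_distD (ratr (cf i)) _ _) _.
    by rewrite distrC in h1; apply: ltrD.
  have : j.+1%:R^-1 + j.+1%:R^-1 = J.+1%:R^-1 :> R.
    have -> : j.+1 = (2 * J.+1)%N by rewrite /j; lia.
    by rewrite natrM; field; rewrite paddr_eq0 ?ler0n // oner_eq0.
  move=> h4; rewrite h4 in h3.
  by move: (le_lt_trans Hi h3); rewrite ltxx.
apply: countable_bigcupT_measurable; first exact: countableP.
move=> [c j] /=; rewrite /F /=.
case: (pselect (rbox c j `<=` ~` K)) => H.
  have -> : [set x | rbox c j `<=` ~` K /\ rbox c j x] = rbox c j.
    by apply/seteqP; split => x /= => [[]|] //.
  exact: rbox_meas.
have -> : [set x | rbox c j `<=` ~` K /\ rbox c j x] = set0.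
  by apply/seteqP; split => x //= [].
exact: measurable0.
Qed.

Lemma leb_sigma_finite m (lam : {measure set (m.-tuple R) -> \bar R}) :
  is_lebesgue lam -> sigma_finite setT lam.
Proof.
move=> hL.
pose B (j : nat) := [set x : m.-tuple R | forall i, tnth [tuple - j%:R | _ < m] i <= tnth x i < tnth [tuple j%:R | _ < m] i].
exists B.
  apply/seteqP; split => x // _.
  pose s := \sum_(i < m) `|tnth x i|.
  exists (Num.truncn s).+1 => // i.
  rewrite !tnth_mktuple.
  have h1 : `|tnth x i| <= s.
    rewrite /s (bigD1 i) //= lerDl; apply: sumr_ge0 => k _; exact: normr_ge0.
  have h2 := truncnS_gt s.
  have h3 : `|tnth x i| < (Num.truncn s).+1%:R by apply: le_lt_trans h2.
  rewrite ltr_norml in h3; case/andP: h3 => h3 h4.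
  by rewrite h4 andbT ltW.
move=> j; split.
  apply: meas_forall => i.
  rewrite -[X in measurable X]setTI.
  have := @measurable_tnth _ R m i measurableT _ (measurable_itv `[tnth [tuple - j%:R | _ < m] i, tnth [tuple j%:R | _ < m] i[).
  by congr measurable; apply/seteqP; split => x /=; rewrite ?in_itv //= => [[_ ->]].
rewrite /B hL; first exact: ltry.
by move=> i; rewrite !tnth_mktuple; apply: (le_trans (y:=0)); rewrite ?oppr_le0 ?ler0n.
Qed.

Lemma sf_pack m (lam : {measure set (m.-tuple R) -> \bar R}) :
  sigma_finite setT lam ->
  exists lam' : {sigma_finite_measure set (m.-tuple R) -> \bar R},
    (lam' : set _ -> \bar R) = lam.
Proof.
move=> sflam.
pose H1 := isSFinite.Build _ _ _ _ (sfinite_measure_sigma_finite sflam).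
pose H2 := isSigmaFinite.Build _ _ _ _ sflam.
pose lam' := HB.pack_for (SigmaFiniteMeasure.type _ R) (Measure.sort lam) H1 H2.
by exists lam'.
Qed.

Lemma tonelli_lam m p (lam : {measure set (m.-tuple R) -> \bar R})
  (sflam : sigma_finite setT lam) (P : probability (p.-tuple R) R)
  (A : set (m.-tuple R * p.-tuple R)) : measurable A ->
  (\int[lam]_v P (xsection A v) = \int[P]_x lam (ysection A x))%E
  /\ measurable_fun setT (fun x : p.-tuple R => lam (ysection A x)).
Proof.
move=> mA; have [lam' lE] := sf_pack m lam sflam.
have E : lam' = lam :> measure _ R by apply: eq_measure.
split.
  have := indic_fubini_tonelli lam' P mA.
  rewrite (indic_fubini_tonelli_FE P mA) (indic_fubini_tonelli_GE lam' mA) => H.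
  rewrite -E; exact: H.
rewrite -lE; exact: (measurable_fun_ysection lam' mA).
Qed.

End Helpers.

Theorem lemma3p4 (R : realType) (n k : nat) (k_gt0 : (0 < k)%N)
  (P : probability (n.-tuple R) R)
  (w : 'I_k -> n.-tuple R) (eps rho : R)
  (lam : {measure set (n.+1.-tuple R) -> \bar R})
  (K : set (n.+1.-tuple R)) :
  P (~` @sphere R n) = 0%E ->
  (forall i, dotp (w i) (w i) = 1) ->
  0 < eps < 1 / 2 -> 0 < rho < 1 / 2 ->
  let w1 := w (Ordinal k_gt0) in
  let E1 := [set x : n.-tuple R | dotp w1 x < - rho] in
  0 < condPr P (negEv w) E1 ->
  is_lebesgue lam ->
  convex_body K ->
  ((condPr P (negEv w) E1)%:E *
     condE P (negEv w `&` E1)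
       (fun x => lam (Kbad w eps rho P (Ksub K x))) <=
   (thr n k eps rho)%:E * lam (Kbad w eps rho P K))%E.
Proof.
move=> hS hw heps hrho w1 E1 hpos hL hK.
case: hK => _ _ cK _.
have mK := closed_meas _ _ _ cK.
have sflam := leb_sigma_finite _ _ _ hL.
set neg := negEv w.
set Kb := Kbad w eps rho P K.
set thrv := thr n k eps rho.
pose H := [set p : n.+1.-tuple R * n.-tuple R | dotp p.1 (ext1 p.2) < 0].
have mH : measurable H.
  rewrite -[X in measurable X]setTI.
  have := @m_dotp_pair R n measurableT _ (measurable_itv `]-oo, 0[).
  by congr measurable; apply/seteqP; split => p /=; rewrite ?in_itv //= => [[_ ->]].
have mneg : measurable neg.
  have -> : neg = ~` [set x | forall i, 0 < dotp (w i) x].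
    apply/seteqP; split => x; rewrite /neg /negEv /fAND /=;
      case: ifP => [/forallP h|/negP h] //=.
    - by move=> e; exfalso; clear -e; lra.
    - by move=> _ H1; apply: h; apply/forallP => i; exact: H1 i.
  apply: measurableC; apply: meas_forall => i.
  rewrite -[X in measurable X]setTI.
  have := @m_dotp_l R n (w i) measurableT _ (measurable_itv `]0, +oo[).
  by congr measurable; apply/seteqP; split => p /=; rewrite ?in_itv //= ?andbT => [[_ ->]].
have mE1 : measurable E1.
  rewrite -[X in measurable X]setTI.
  have := @m_dotp_l R n w1 measurableT _ (measurable_itv `]-oo, - rho[).
  by congr measurable; apply/seteqP; split => p /=; rewrite ?in_itv //= => [[_ ->]].
set N := fine (P neg).
have N0 : 0 < N.
  have Nge : 0 <= N by apply: fine_ge0; exact: measure_ge0.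
  rewrite lt_neqAle Nge andbT eq_sym; apply/negP => /eqP N0.
  by move: hpos; rewrite /condPr -/neg -/N N0 invr0 mulr0 ltxx.
have finP : forall B, measurable B -> P B = (fine (P B))%:E.
  by move=> B mB; rewrite fineK //; exact: fin_num_measure.
pose A0 := H `&` (setT `*` neg).
have mA0 : measurable A0 by apply: measurableI => //; exact: measurableX.
have xA0 : forall v, xsection A0 v = [set x | dotp v (ext1 x) < 0] `&` neg.
  move=> v; apply/seteqP; split => x; rewrite /xsection /A0 /H /= inE /=.
    by move=> [h1 [_ h2]].
  by move=> [h1 h2].
have KbE : Kb = K `&` [set v | (P (xsection A0 v) < (thrv * N)%:E)%E].
  apply/seteqP; split => v; rewrite /Kb /Kbad /condPr /= -/neg -/N xA0.
    move=> [Kv hv]; split => //.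
    rewrite finP; last first.
      by have := measurable_xsection v mA0; rewrite xA0.
    by rewrite lte_fin -ltr_pdivrMr.
  move=> [Kv hv]; split => //.
  move: hv; rewrite finP; last first.
    by have := measurable_xsection v mA0; rewrite xA0.
  by rewrite lte_fin -ltr_pdivrMr.
have mKb : measurable Kb.
  rewrite KbE; apply: measurableI => //.
  rewrite -[X in measurable X]setTI.
  have := measurable_fun_xsection P mA0 measurableT (emeasurable_itv `]-oo, (thrv * N)%:E[).
  by congr measurable; apply/seteqP; split => p /=; rewrite ?in_itv //= => [[_ ->]].
pose A := (Kb `*` neg) `&` H.
have mA : measurable A by apply: measurableI => //; exact: measurableX.
have [tonE mys] := tonelli_lam _ _ _ lam sflam P A mA.
have ysE : forall x, neg x -> Kbad w eps rho P (Ksub K x) = ysection A x.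
  move=> x nx; apply/seteqP; split => v; rewrite /ysection /A /H /Ksub /Kb /Kbad /= inE /=.
    by move=> [[h1 h2] h3].
  by move=> [[[h1 h3] _] h2].
have xsE1 : forall v, Kb v -> xsection A v = [set x | dotp v (ext1 x) < 0] `&` neg.
  move=> v Kbv; apply/seteqP; split => x; rewrite /xsection /A /H /= inE /=.
    by move=> [[_ h1] h2].
  by move=> [h1 h2].
have xsE2 : forall v, ~ Kb v -> xsection A v = set0.
  move=> v Kbv; apply/seteqP; split => x; rewrite /xsection /A /H /= ?inE /=.
    by move=> [[h _] _].
  by [].
rewrite /condE /condPr -/neg -/N.
have -> : E1 `&` neg = neg `&` E1 by rewrite setIC.
set a := fine (P (neg `&` E1)).
have a0 : a != 0.
  apply/negP => /eqP a0; move: hpos; rewrite /condPr -/neg -/N setIC -/a a0 mul0r ltxx //.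
have N0' : N != 0 by rewrite gt_eqF.
rewrite muleA -EFinM (_ : a / N * a^-1 = N^-1); last by field; rewrite N0' a0.
apply: (@le_trans _ _ ((N^-1)%:E * ((thrv * N)%:E * lam Kb))%E); last first.
  by rewrite muleA -EFinM (_ : N^-1 * (thrv * N) = thrv) //; field.
apply: lee_wpmul2l; first by rewrite lee_fin invr_ge0 ltW.
rewrite (eq_integral (fun x => lam (ysection A x))); last first.
  move=> x; rewrite inE => -[nx _]; by rewrite ysE.
apply: le_trans.
  apply: (ge0_subset_integral P (measurableI _ _ mneg mE1) measurableT mys).
    by move=> x _; exact: measure_ge0.
  exact: subsetT.
rewrite -tonE.
apply: (@le_trans _ _ (\int[lam]_v ((thrv * N) * \1_Kb v)%:E)%E).
  apply: (ge0_le_integral lam measurableT).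
  - by move=> v _; exact: measure_ge0.
  - exact: measurable_fun_xsection.
  - apply/measurable_EFinP; apply: measurable_funM; first exact: measurable_cst.
    exact: measurable_indic.
  move=> v _; case: (pselect (Kb v)) => Kbv.
    rewrite indicE mem_set // mulr1 xsE1 //.
    move: Kbv; rewrite {1}KbE => -[_ /=]; rewrite xA0 => h; exact: ltW.
  rewrite xsE2 // measure0 indicE memNset // mulr0 //.
rewrite (integralZl_indic measurableT (fun _ => Kb)) //; last first.
  move=> hlt; apply/seteqP; split => v // Kbv.
  move: Kbv; rewrite {1}KbE => -[_ /=] h.
  have : (0 <= P (xsection A0 v))%E by exact: measure_ge0.
  move=> h0; have := le_lt_trans h0 h; rewrite lte_fin => h1.
  by move: (lt_trans h1 hlt); rewrite ltxx.
by rewrite integral_indic // setIT.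
Qed.
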